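(* Let $E$ be a directed graph. The graph inverse semigroup $\mathcal S(E)$ admits a nontrivial strong grading (by some group) if and only if $E$ is nonempty and has no source vertices.
   Context: A directed graph $E=(E^0,E^1,\mathbf r,\mathbf s)$ has vertices $E^0$, edges $E^1$, source and range maps $\mathbf s,\mathbf r:E^1\to E^0$. A vertex $v$ is a source if $\mathbf r^{-1}(v)=\emptyset$. $\mathcal S(E)$ is the semigroup with zero generated by $E^0\cup E^1\cup\{e^{-1}:e\in E^1\}$ subject to: $vw=\delta_{v,w}v$ for $v,w\in E^0$; $\mathbf s(e)e=e\mathbf r(e)=e$; $\mathbf r(e)e^{-1}=e^{-1}\mathbf s(e)=e^{-1}$; $e^{-1}f=\delta_{e,f}\mathbf r(e)$ for $e,f\in E^1$. A $\Gamma$-grading of a semigroup $S$ with zero is a map $\deg:S\setminus\{0\}\to\Gamma$ with $\deg(st)=\deg(s)\deg(t)$ whenever $st\neq0$; $S_\alpha=\deg^{-1}(\alpha)\cup\{0\}$. It is trivial if $S_\alpha=\{0\}$ for all $\alpha\neq\varepsilon$ (the identity of $\Gamma$), and strong if $S_\alpha S_\beta=S_{\alpha\beta}$ for all $\alpha,\beta\in\Gamma$. *)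

(* Defs.v *)
Record Group := {
  gcar :> Type;
  gmul : gcar -> gcar -> gcar;
  gone : gcar;
  ginv : gcar -> gcar;
  gmulA : forall x y z, gmul x (gmul y z) = gmul (gmul x y) z;
  gmul1l : forall x, gmul gone x = x;
  gmul1r : forall x, gmul x gone = x;
  gmulVl : forall x, gmul (ginv x) x = gone;
  gmulVr : forall x, gmul x (ginv x) = gone
}.

Record Graph := {
  vert : Type;
  edge : Type;
  rg : edge -> vert;
  sc : edge -> vert
}.

Definition is_source (E : Graph) (v : vert E) : Prop :=
  forall e : edge E, rg E e <> v.

(** Generators: vertices, edges, and ghost edges e^{-1}. *)
Inductive letter (E : Graph) : Type :=
  | LV : vert E -> letter E
  | LE : edge E -> letter E
  | LI : edge E -> letter E.
Arguments LV {E}. Arguments LE {E}. Arguments LI {E}.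

Inductive term (E : Graph) : Type :=
  | TZ : term E
  | TG : letter E -> term E
  | TM : term E -> term E -> term E.
Arguments TZ {E}. Arguments TG {E}. Arguments TM {E}.

(** The congruence generated by the semigroup-with-zero axioms and the
    defining relations of S(E).  S(E) is the quotient [term E / cong E]. *)
Inductive cong (E : Graph) : term E -> term E -> Prop :=
  | c_refl t : cong E t t
  | c_sym t u : cong E t u -> cong E u t
  | c_trans t u w : cong E t u -> cong E u w -> cong E t w
  | c_mul t t' u u' : cong E t t' -> cong E u u' -> cong E (TM t u) (TM t' u')
  | c_assoc t u w : cong E (TM t (TM u w)) (TM (TM t u) w)
  | c_zl t : cong E (TM TZ t) TZ
  | c_zr t : cong E (TM t TZ) TZ
  | c_vv v : cong E (TM (TG (LV v)) (TG (LV v))) (TG (LV v))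
  | c_vw v w : v <> w -> cong E (TM (TG (LV v)) (TG (LV w))) TZ
  | c_se e : cong E (TM (TG (LV (sc E e))) (TG (LE e))) (TG (LE e))
  | c_er e : cong E (TM (TG (LE e)) (TG (LV (rg E e)))) (TG (LE e))
  | c_ri e : cong E (TM (TG (LV (rg E e))) (TG (LI e))) (TG (LI e))
  | c_is e : cong E (TM (TG (LI e)) (TG (LV (sc E e)))) (TG (LI e))
  | c_ie e : cong E (TM (TG (LI e)) (TG (LE e))) (TG (LV (rg E e)))
  | c_if e f : e <> f -> cong E (TM (TG (LI e)) (TG (LE f))) TZ.

Definition is_zero (E : Graph) (t : term E) : Prop := cong E t TZ.

(** A Γ-grading of S(E): deg : S(E)\{0} -> Γ (given on representatives,
    well defined on nonzero classes) with deg(st) = deg s deg t when st <> 0. *)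
Definition is_grading (E : Graph) (G : Group) (deg : term E -> G) : Prop :=
  (forall t u, ~ is_zero E t -> cong E t u -> deg t = deg u) /\
  (forall t u, ~ is_zero E (TM t u) -> deg (TM t u) = gmul G (deg t) (deg u)).

Definition in_comp (E : Graph) (G : Group) (deg : term E -> G) (a : G)
  (t : term E) : Prop := is_zero E t \/ deg t = a.

Definition trivial_grading (E : Graph) (G : Group) (deg : term E -> G) : Prop :=
  forall a : G, a <> gone G -> forall t, in_comp E G deg a t -> is_zero E t.

Definition strong_grading (E : Graph) (G : Group) (deg : term E -> G) : Prop :=
  forall a b : G,
    (forall s t, in_comp E G deg a s -> in_comp E G deg b t ->
       in_comp E G deg (gmul G a b) (TM s t)) /\
    (forall u, in_comp E G deg (gmul G a b) u ->
       exists s t, in_comp E G deg a s /\ in_comp E G deg b t /\ cong E (TM s t) u).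

(* Main.v *)
Require Import Defs.
From Stdlib Require Import Classical List Bool.
Import ListNotations.

Section S.
Variable E : Graph.

Definition X := (list (edge E) * vert E)%type.
Definition src (x : X) : vert E :=
  match fst x with [] => snd x | e :: _ => sc E e end.
Definition cns (e : edge E) (x : X) : X := (e :: fst x, snd x).

Fixpoint sem (t : term E) : X -> X -> Prop :=
  match t with
  | TZ => fun _ _ => False
  | TG (LV w) => fun x y => y = x /\ src x = w
  | TG (LE e) => fun x y => y = cns e x /\ rg E e = src x
  | TG (LI e) => fun x y => x = cns e y /\ rg E e = src y
  | TM t u => fun x y => exists z, sem u x z /\ sem t z y
  end.

Lemma sem_cong t u : cong E t u -> forall x y, sem t x y <-> sem u x y.
Proof.
  induction 1; intros x y; simpl in *.
  - tauto.
  - rewrite IHcong; tauto.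
  - rewrite IHcong1; auto.
  - split; intros [z [H1 H2]]; exists z; [rewrite <- IHcong2, <- IHcong1 | rewrite IHcong2, IHcong1]; auto.
  - split.
    + intros [z [[z1 [H1 H2]] H3]]. exists z1; split; auto. exists z; auto.
    + intros [z [H1 [z1 [H2 H3]]]]. exists z1; split; auto. exists z; auto.
  - split; [intros [z [_ []]] | intros []].
  - split; [intros [z [[] _]] | intros []].
  - split; [intros [z [[-> H1] [-> H2]]]; auto | intros [Ha Hb]; exists x; subst; simpl; auto].
  - split; [intros [z [[-> H1] [-> H2]]]; congruence | intros []].
  - split; [intros [z [[-> H1] [-> H2]]]; auto | intros [Ha Hb]; exists y; subst; simpl; auto].
  - split; [intros [z [[-> H1] [-> H2]]]; auto | intros [Ha Hb]; exists x; subst; simpl; auto].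
  - split; [intros [z [[H0 H1] [-> H2]]]; auto | intros [Ha Hb]; exists y; subst; simpl; auto].
  - split; [intros [z [[-> H1] [H0 H2]]]; subst; auto | intros [Ha Hb]; exists x; subst; simpl; auto].
  - split.
    + intros [z [[-> H1] [H3 H2]]]. unfold cns in H3. destruct x, y; simpl in *.
      injection H3; intros; subst; auto.
    + intros [Ha Hb]. exists (cns e x); subst; simpl; auto.
  - split; [intros [z [[-> H1] [H3 H2]]] | intros []].
    unfold cns in H3. injection H3; intros; subst; auto.
Qed.

Lemma nz_sem t x y : sem t x y -> ~ is_zero E t.
Proof. intros H Hz. apply (sem_cong _ _ Hz x y) in H. exact H. Qed.

Lemma nz_vert v : ~ is_zero E (TG (LV v)).
Proof. apply (nz_sem _ ([], v) ([], v)). simpl; auto. Qed.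

Lemma nz_edge e : ~ is_zero E (TG (LE e)).
Proof. apply (nz_sem _ ([], rg E e) ([e], rg E e)). simpl; auto. Qed.

Lemma source_lemma v : is_source E v -> forall t z, sem t ([], v) z ->
  z = ([], v) /\ cong E (TM t (TG (LV v))) (TG (LV v)).
Proof.
  intros Hs t. induction t as [| [w|e|e] | t1 IH1 t2 IH2]; intros z H; simpl in H.
  - destruct H.
  - destruct H as [-> <-]. split; auto. apply c_vv.
  - destruct H as [_ H]. exfalso; apply (Hs e); exact H.
  - destruct H as [H _]. discriminate H.
  - destruct H as [z1 [H2 H1]]. destruct (IH2 _ H2) as [-> C2].
    destruct (IH1 _ H1) as [-> C1]. split; auto.
    eapply c_trans; [apply c_sym, c_assoc|].
    eapply c_trans; [apply c_mul; [apply c_refl | exact C2] | exact C1].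
Qed.

Lemma inh_or_zero t : inhabited (vert E) \/ is_zero E t.
Proof.
  induction t as [| [w|e|e] | t1 IH1 t2 IH2].
  - right; apply c_refl.
  - left; constructor; exact w.
  - left; constructor; exact (sc E e).
  - left; constructor; exact (sc E e).
  - destruct IH1 as [?|H1]; auto. right.
    eapply c_trans; [apply c_mul; [exact H1 | apply c_refl] | apply c_zl].
Qed.

Fixpoint dg (t : term E) : bool :=
  match t with
  | TZ => false
  | TG (LV _) => false
  | TG _ => true
  | TM a b => xorb (dg a) (dg b)
  end.

Lemma dg_cong t u : cong E t u -> dg t = dg u \/ is_zero E t.
Proof.
  induction 1; simpl.
  - auto.
  - destruct IHcong as [?|Hz]; auto. right. eapply c_trans; [apply c_sym; exact H | exact Hz].
  - destruct IHcong1 as [?|Hz]; auto.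
    + destruct IHcong2 as [?|Hz]; [left; congruence|]. right. eapply c_trans; [exact H|exact Hz].
  - destruct IHcong1 as [?|Hz].
    + destruct IHcong2 as [?|Hz2]; [left; congruence|]. right.
      eapply c_trans; [apply c_mul; [apply c_refl | exact Hz2] | apply c_zr].
    + right. eapply c_trans; [apply c_mul; [exact Hz | apply c_refl] | apply c_zl].
  - left; destruct (dg t), (dg u), (dg w); reflexivity.
  - right; apply c_zl.
  - right; apply c_zr.
  - auto.
  - right; apply c_vw; auto.
  - auto.
  - auto.
  - auto.
  - auto.
  - auto.
  - right; apply c_if; auto.
Qed.

Lemma right_unit u : is_zero E u \/ exists v, cong E (TM u (TG (LV v))) u.
Proof.
  induction u as [| [w|e|e] | t1 IH1 t2 IH2].
  - left; apply c_refl.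
  - right; exists w; apply c_vv.
  - right; exists (rg E e); apply c_er.
  - right; exists (sc E e); apply c_is.
  - destruct IH2 as [Hz|[v Hv]].
    + left. eapply c_trans; [apply c_mul; [apply c_refl | exact Hz] | apply c_zr].
    + right; exists v. eapply c_trans; [apply c_sym, c_assoc|].
      apply c_mul; [apply c_refl | exact Hv].
Qed.

Definition Z2 : Group.
Proof.
  refine {| gcar := bool; gmul := xorb; gone := false; ginv := fun x => x |};
  intros; repeat match goal with b : bool |- _ => destruct b end; reflexivity.
Defined.

End S.

Theorem theorem8p8 (E : Graph) :
  (exists (G : Group) (deg : term E -> G),
      is_grading E G deg /\ ~ trivial_grading E G deg /\ strong_grading E G deg)
  <->
  (inhabited (vert E) /\ forall v : vert E, ~ is_source E v).
Proof.
  split.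
  - intros [G [deg [[Hg1 Hg2] [Hnt Hst]]]]. split.
    + destruct (classic (inhabited (vert E))) as [H|H]; auto.
      exfalso; apply Hnt. intros a _ t [Hz|_]; auto.
      destruct (inh_or_zero E t); tauto.
    + intros v Hs. apply Hnt. intros a Ha t _. exfalso; apply Ha.
      assert (Hdv : deg (TG (LV v)) = gone G).
      { assert (Hnz : ~ is_zero E (TM (TG (LV v)) (TG (LV v)))).
        { intro Hz. apply (nz_vert E v). eapply c_trans; [apply c_sym, c_vv | exact Hz]. }
        pose proof (Hg2 _ _ Hnz) as H1.
        rewrite (Hg1 _ _ Hnz (c_vv E v)) in H1.
        set (d := deg (TG (LV v))) in *.
        transitivity (gmul G (gmul G (ginv G d) d) d); [rewrite gmulVl, gmul1l; reflexivity|].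
        rewrite <- gmulA, <- H1, gmulVl; reflexivity. }
      destruct (Hst (ginv G a) a) as [_ H2].
      destruct (H2 (TG (LV v))) as [s [t' [Hs' [Ht' Hc]]]].
      { right. rewrite gmulVl. exact Hdv. }
      assert (Ht'nz : ~ is_zero E t').
      { intro Hz. apply (nz_vert E v). eapply c_trans; [apply c_sym; exact Hc|].
        eapply c_trans; [apply c_mul; [apply c_refl | exact Hz] | apply c_zr]. }
      destruct Ht' as [Hz|Hdt]; [contradiction|].
      assert (Hsem : sem E (TM s t') ([], v) ([], v)).
      { apply (sem_cong E _ _ Hc). simpl; auto. }
      destruct Hsem as [z [Hz _]].
      destruct (source_lemma E v Hs t' z Hz) as [_ Hc2].
      assert (Hnz2 : ~ is_zero E (TM t' (TG (LV v)))).
      { intro Hz2. apply (nz_vert E v). eapply c_trans; [apply c_sym; exact Hc2 | exact Hz2]. }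
      pose proof (Hg2 _ _ Hnz2) as E1. rewrite (Hg1 _ _ Hnz2 Hc2), Hdv, Hdt, gmul1r in E1.
      symmetry; exact E1.
  - intros [[v0] Hns].
    exists (Z2), (dg E). split; [split|split].
    + intros t u Hnz Hc. destruct (dg_cong E t u Hc) as [H|H]; [exact H | contradiction].
    + intros t u _. reflexivity.
    + intros H. apply (Hns v0). intros e He.
      apply (nz_edge E e). apply (H true); [discriminate | right; reflexivity].
    + intros a b. split.
      * intros s t [Hs|Hs] [Ht|Ht].
        -- left. eapply c_trans; [apply c_mul; [exact Hs | apply c_refl] | apply c_zl].
        -- left. eapply c_trans; [apply c_mul; [exact Hs | apply c_refl] | apply c_zl].
        -- left. eapply c_trans; [apply c_mul; [apply c_refl | exact Ht] | apply c_zr].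
        -- right. simpl. rewrite Hs, Ht. reflexivity.
      * intros u [Hu|Hu].
        -- exists TZ, TZ. split; [left; apply c_refl | split; [left; apply c_refl|]].
           eapply c_trans; [apply c_zl | apply c_sym; exact Hu].
        -- destruct (right_unit E u) as [Hz|[w Hw]].
           { exists TZ, TZ. split; [left; apply c_refl | split; [left; apply c_refl|]].
             eapply c_trans; [apply c_zl | apply c_sym; exact Hz]. }
           simpl in Hu. destruct b.
           ++ destruct (classic (exists e, rg E e = w)) as [[e He]|Hne].
              2:{ exfalso. apply (Hns w). intros e He. apply Hne; exists e; exact He. }
              exists (TM u (TG (LI e))), (TG (LE e)). split; [|split].
              ** right. simpl. rewrite Hu. destruct a; reflexivity.
              ** right. reflexivity.
              ** eapply c_trans; [apply c_sym, c_assoc|].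
                 eapply c_trans; [apply c_mul; [apply c_refl | apply c_ie]|].
                 rewrite He. exact Hw.
           ++ exists u, (TG (LV w)). split; [|split].
              ** right. rewrite Hu. destruct a; reflexivity.
              ** right. reflexivity.
              ** exact Hw.
Qed.
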